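(* Let $\mathfrak{g}$ be a real filiform nilpotent Lie algebra of dimension $2n$, and let $e_1,\dots,e_{2n}$ be a basis such that for each $k=1,\dots,2n-2$ the term $\mathfrak{g}^k$ of the lower central series is spanned by $e_{2+k},\dots,e_{2n}$. Write $\hat k=2n+1-k$. If $[e_k,e_{\hat k}]\neq0$ for some $3\le k\le n$, then there is no positive filtration of $\mathfrak{g}$ with an adapted basis $f_1,\dots,f_{2n}$ whose weights $w_1,\dots,w_{2n}$ satisfy, with $\hat i=2n+1-i$: (F1) $0<w_1\le\dots\le w_{2n}$; (F2) $w_i+w_{\hat i}\ge w_{2n}$ and $w_i+w_{\hat i}>w_{2n-1}$ for all $i$; (F3) if $w_i+w_{\hat i}=w_{2n}$ and $w_i\neq w_{\hat i}$, then one of $w_i,w_{\hat i}$ has multiplicity at least two; (F4) if $w_i+w_{\hat i}=w_{2n}$ and $w_i=w_{\hat i}$, then either $i=\hat i$ or $w_i$ has multiplicity greater than two.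
   Context: Lower central series: $\mathfrak{g}^1=[\mathfrak{g},\mathfrak{g}]$, $\mathfrak{g}^{k+1}=[\mathfrak{g},\mathfrak{g}^k]$. A nilpotent Lie algebra of dimension $m$ is filiform if $\dim\mathfrak{g}^k=m-1-k$ for $1\le k\le m-2$. A positive filtration is a chain $\mathfrak{g}=L_1\supseteq L_2\supseteq\dots\supseteq L_N$ (not necessarily strict), with $L_k=0$ for $k>N$, such that $[L_i,L_j]\subseteq L_{i+j}$ for all positive integers $i,j$. The weight of a nonzero element is the largest $w$ with the element in $L_w$. An ordered basis is adapted if each $L_w$ is spanned by the last $\dim L_w$ basis elements; $w_i$ is the weight of the $i$-th basis element; the multiplicity of a value $\alpha$ is the number of $i$ with $w_i=\alpha$. *)

(* Defs.v *)
(* Real Lie algebras as finite-dimensional vector spaces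
   (vectType) over R : realType with a bilinear alternating bracket
   satisfying Jacobi. Indices of bases are 1-based (nat), as in the paper. *)
From HB Require Import structures.
From mathcomp Require Import all_boot all_order all_algebra.
From mathcomp Require Import reals.
Set Implicit Arguments. Unset Strict Implicit. Unset Printing Implicit Defensive.
Import Order.TTheory GRing.Theory Num.Theory.
Local Open Scope ring_scope.

Section Lie.
Variables (R : realType) (V : vectType R).

Definition is_lie_bracket (br : V -> V -> V) : Prop :=
  [/\ (forall (a : R) x y z, br (a *: x + y) z = a *: br x z + br y z),
      (forall (a : R) x y z, br z (a *: x + y) = a *: br z x + br z y),
      (forall x, br x x = 0) &
      (forall x y z, br x (br y z) + br y (br z x) + br z (br x y) = 0)].

(* [U, W] = subspace spanned by all brackets [u, w], u in U, w in W
   (by bilinearity, spanned by brackets of basis vectors). *)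
Definition brsp (br : V -> V -> V) (U W : {vspace V}) : {vspace V} :=
  (<<[seq br u w | u <- (vbasis U : seq V), w <- (vbasis W : seq V)]>>)%VS.

Fixpoint lcs (br : V -> V -> V) (k : nat) : {vspace V} :=
  if k is k'.+1 then brsp br fullv (lcs br k') else fullv.

Definition nilpotent_lie (br : V -> V -> V) : Prop :=
  exists k, lcs br k = 0%VS.

Definition filiform (br : V -> V -> V) : Prop :=
  nilpotent_lie br /\
  forall k, (1 <= k <= \dim (fullv : {vspace V}) - 2)%N ->
    \dim (lcs br k) = (\dim (fullv : {vspace V}) - 1 - k)%N.

(* positive filtration g = L_1 ⊇ L_2 ⊇ ... ⊇ L_N, L_k = 0 for k > N,
   [L_i, L_j] ⊆ L_{i+j}; only indices >= 1 matter. *)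
Definition pos_filtration (br : V -> V -> V) (L : nat -> {vspace V}) : Prop :=
  [/\ L 1%N = fullv,
      (forall k, (1 <= k)%N -> (L k.+1 <= L k)%VS),
      (exists N, forall k, (N < k)%N -> L k = 0%VS) &
      (forall i j, (1 <= i)%N -> (1 <= j)%N -> (brsp br (L i) (L j) <= L (i + j)%N)%VS)].

Definition is_weight (L : nat -> {vspace V}) (x : V) (w : nat) : Prop :=
  [/\ (1 <= w)%N, x \in L w & forall w', (w < w')%N -> x \notin L w'].

Definition adapted_basis (L : nat -> {vspace V}) (m : nat) (f : nat -> V) : Prop :=
  basis_of fullv [seq f i | i <- iota 1 m] /\
  forall w, (1 <= w)%N ->
    L w = (<<[seq f i | i <- iota (m - \dim (L w)).+1 (\dim (L w))]>>)%VS.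

End Lie.

Definition mult (m : nat) (w : nat -> nat) (a : nat) : nat :=
  count (fun i => w i == a) (iota 1 m).

(* Main.v *)
Require Import Defs.
From HB Require Import structures.
From mathcomp Require Import all_boot all_order all_algebra.
From mathcomp Require Import reals.
From mathcomp Require Import zify.
From Stdlib Require Import Classical.
Import Order.TTheory GRing.Theory Num.Theory.
Local Open Scope ring_scope.
Set Implicit Arguments. Unset Strict Implicit.
Section Aux.
Variables (R : realType) (V : vectType R) (br : V -> V -> V).
Hypothesis Hlie : is_lie_bracket br.

Lemma brDZl a x y z : br (a *: x + y) z = a *: br x z + br y z.
Proof. by case: Hlie. Qed.
Lemma brDZr a x y z : br z (a *: x + y) = a *: br z x + br z y.
Proof. by case: Hlie. Qed.
Lemma br_xx x : br x x = 0. Proof. by case: Hlie. Qed.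

Lemma br0l z : br 0 z = 0.
Proof.
have h := brDZl 1 0 0 z; rewrite !scale1r addr0 in h.
by apply/(addrI (br 0 z)); rewrite addr0 -h.
Qed.
Lemma br0r z : br z 0 = 0.
Proof.
have h := brDZr 1 0 0 z; rewrite !scale1r addr0 in h.
by apply/(addrI (br z 0)); rewrite addr0 -h.
Qed.
Lemma brDl x y z : br (x + y) z = br x z + br y z.
Proof. by have := brDZl 1 x y z; rewrite !scale1r. Qed.
Lemma brDr x y z : br z (x + y) = br z x + br z y.
Proof. by have := brDZr 1 x y z; rewrite !scale1r. Qed.
Lemma brZl a x z : br (a *: x) z = a *: br x z.
Proof. by have := brDZl a x 0 z; rewrite !addr0 br0l addr0. Qed.
Lemma brZr a x z : br z (a *: x) = a *: br z x.
Proof. by have := brDZr a x 0 z; rewrite !addr0 br0r addr0. Qed.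
Lemma br_anti x y : br x y = - br y x.
Proof.
have := br_xx (x + y); rewrite brDl !brDr !br_xx add0r addr0 => /eqP.
by rewrite addr_eq0 => /eqP.
Qed.

Lemma br_suml (I : Type) (r : seq I) (P : pred I) (F : I -> V) z :
  br (\sum_(i <- r | P i) F i) z = \sum_(i <- r | P i) br (F i) z.
Proof. exact: (big_morph (br^~ z) (fun x y => brDl x y z) (br0l z)). Qed.
Lemma br_sumr (I : Type) (r : seq I) (P : pred I) (F : I -> V) z :
  br z (\sum_(i <- r | P i) F i) = \sum_(i <- r | P i) br z (F i).
Proof. exact: (big_morph (br z) (fun x y => brDr x y z) (br0r z)). Qed.

Lemma brsp_mem (U W : {vspace V}) u w :
  u \in U -> w \in W -> br u w \in brsp br U W.
Proof.
move=> Uu Ww; rewrite (coord_vbasis Uu) (coord_vbasis Ww) br_suml.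
apply: memv_suml => i _; rewrite brZl br_sumr; apply: memvZ.
apply: memv_suml => j _; rewrite brZr; apply: memvZ.
apply: memv_span; apply: allpairs_f; apply: mem_nth; by rewrite size_tuple.
Qed.

Lemma brsp_sub (U W X : {vspace V}) :
  (forall u w, u \in U -> w \in W -> br u w \in X) -> (brsp br U W <= X)%VS.
Proof.
move=> H; apply/span_subvP => v /allpairsP [[u w] [/= hu hw ->]].
by apply: H; apply: vbasis_mem.
Qed.

Lemma brsp_mono (U U' W W' : {vspace V}) :
  (U <= U')%VS -> (W <= W')%VS -> (brsp br U W <= brsp br U' W')%VS.
Proof.
move=> /subvP sU /subvP sW; apply: brsp_sub => u w hu hw.
by apply: brsp_mem; [apply: sU|apply: sW].
Qed.


Lemma free_iota_sub (g : nat -> V) m t :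
  free [seq g i | i <- iota 1 m] -> (1 <= t <= m.+1)%N ->
  free [seq g i | i <- iota t (m.+1 - t)].
Proof.
move=> hf ht; have E : iota 1 m = iota 1 (t - 1) ++ iota (1 + (t - 1)) (m.+1 - t).
  by rewrite -iotaD; congr iota; lia.
move: hf; rewrite E map_cat => /catr_free.
by have -> : (1 + (t - 1) = t)%N by lia.
Qed.

Lemma split_sp (U : {vspace V}) x : (U <= <[x]> + U)%VS.
Proof. exact: addvSr. Qed.

Lemma dim_add_line (U : {vspace V}) x : x \notin U -> \dim (<[x]> + U) = (\dim U).+1.
Proof.
move=> hx; have h := dimv_leqif_sup (addvSr <[x]> U).
have lt : (\dim U < \dim (<[x]> + U))%N.
  rewrite (ltn_leqif h) subv_add negb_and -memvE hx //.
have le : (\dim (<[x]> + U) <= 1 + \dim U)%N.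
  by apply: leq_trans (dimv_add_leqif _ _) _; rewrite leq_add2r dim_vline; case: (x != 0).
lia.
Qed.

End Aux.

Section Main.
Variables (R : realType) (V : vectType R) (br : V -> V -> V) (n : nat) (e : nat -> V).
Hypothesis Hlie : is_lie_bracket br.
Hypothesis Hnil : nilpotent_lie br.
Hypothesis Hbasis : basis_of fullv [seq e i | i <- iota 1 (2 * n)].
Hypothesis Hlcs : forall k, (1 <= k <= 2 * n - 2)%N ->
     lcs br k = (<<[seq e i | i <- iota (2 + k) (2 * n - 1 - k)]>>)%VS.
Hypothesis Hn : (3 <= n)%N.

Definition F t : {vspace V} := (<<[seq e i | i <- iota t ((2 * n).+1 - t)]>>)%VS.

Lemma freeF t : (1 <= t <= (2 * n).+1)%N -> free [seq e i | i <- iota t ((2 * n).+1 - t)].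
Proof. by move=> ht; apply: free_iota_sub => //; case/andP: Hbasis. Qed.

Lemma dimF t : (1 <= t <= (2 * n).+1)%N -> \dim (F t) = ((2 * n).+1 - t)%N.
Proof. by move=> ht; rewrite /F (eqP (freeF ht)) size_map size_iota. Qed.

Lemma F1 : F 1 = fullv.
Proof. by rewrite /F subn1 /= -(span_basis Hbasis). Qed.

Lemma Fend : F (2 * n).+1 = 0%VS.
Proof. by rewrite /F subnn /= span_nil. Qed.

Lemma Fcons t : (1 <= t <= 2 * n)%N -> F t = (<[e t]> + F t.+1)%VS.
Proof.
move=> ht; rewrite /F; have -> : ((2 * n).+1 - t = ((2 * n).+1 - t.+1).+1)%N by lia.
by rewrite /= span_cons.
Qed.

Lemma e_notin t : (1 <= t <= 2 * n)%N -> e t \notin F t.+1.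
Proof.
move=> ht; have := @freeF t; rewrite /F.
have -> : ((2 * n).+1 - t = ((2 * n).+1 - t.+1).+1)%N by lia.
by rewrite /= free_cons => /(_ ltac:(lia)) /andP[].
Qed.

Lemma mem_e t i : (1 <= t)%N -> (t <= i <= 2 * n)%N -> e i \in F t.
Proof. by move=> ht hi; apply: memv_span; apply: map_f; rewrite mem_iota; lia. Qed.

Lemma Fmono s t : (1 <= s <= t)%N -> (F t <= F s)%VS.
Proof.
move=> hs; apply/span_subvP => v /mapP [i]; rewrite mem_iota => hi ->.
apply: mem_e; lia.
Qed.

Lemma Fdec t x : (1 <= t <= 2 * n)%N -> x \in F t ->
  exists a x', x' \in F t.+1 /\ x = a *: e t + x'.
Proof.
move=> ht; rewrite Fcons // => /memv_addP [y /vlineP [a ->] [x' hx' ->]].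
by exists a, x'.
Qed.

Lemma lcsF k : (1 <= k <= 2 * n - 2)%N -> lcs br k = F k.+2.
Proof.
move=> hk; rewrite Hlcs // /F.
by have -> : ((2 * n).+1 - k.+2 = 2 * n - 1 - k)%N by lia.
Qed.

Lemma lcs1 : brsp br fullv fullv = F 3.
Proof. by rewrite -(@lcsF 1) //; lia. Qed.

Lemma lcs_succ s : (3 <= s <= 2 * n - 1)%N -> brsp br fullv (F s) = F s.+1.
Proof.
move=> hs.
have E1 : lcs br (s - 2) = F s by rewrite lcsF; [congr F; lia | lia].
have E2 : lcs br (s - 1) = F s.+1 by rewrite lcsF; [congr F; lia | lia].
rewrite -E1 -E2; have -> : (s - 1 = (s - 2).+1)%N by lia.
by [].
Qed.

Lemma central u : br u (e (2 * n)) = 0.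
Proof.
set m := (2 * n - 2)%N.
have Em : lcs br m = F (2 * n) by rewrite lcsF /m; [congr F; lia| lia].
have Em1 : lcs br m.+1 = brsp br fullv (F (2 * n)) by rewrite /= Em.
have sub : (lcs br m.+1 <= F (2 * n))%VS.
  have E : F (2 * n) = brsp br fullv (F (2 * n - 1)).
    by rewrite lcs_succ; [congr F; lia| lia].
  rewrite Em1 {2}E.
  apply: (brsp_mono Hlie) => //; apply: Fmono; lia.
have d1 : \dim (F (2 * n)) = 1%N by rewrite dimF; lia.
have hmem : br u (e (2 * n)) \in lcs br m.+1.
  by rewrite Em1; apply: (brsp_mem Hlie); [exact: memvf| apply: mem_e; lia].
case: (eqVneq (lcs br m.+1) 0%VS) => [h|hne].
  by move: hmem; rewrite h memv0 => /eqP.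
exfalso.
have EQ : lcs br m.+1 = F (2 * n).
  apply/eqP; rewrite eqEdim sub d1 /= lt0n dimv_eq0 //.
have stab : forall j, lcs br (m + j) = F (2 * n).
  elim=> [|j IH]; first by rewrite addn0.
  by rewrite addnS /= IH -Em /= -/(lcs br m.+1) EQ.
have zero : forall N j, lcs br N = 0%VS -> lcs br (N + j) = 0%VS.
  move=> N; elim=> [|j IH] h0; first by rewrite addn0.
  rewrite addnS /= IH //; apply/eqP; rewrite -subv0; apply: brsp_sub => x y _.
  by rewrite memv0 => /eqP ->; rewrite (br0r Hlie) memv0.
case: Hnil => N hN.
have hF : F (2 * n) != 0%VS by rewrite -dimv_eq0 d1.
case: (leqP m N) => hmN.
  by move: hF; rewrite -(stab (N - m)%N) subnKC // hN eqxx.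
by move: hF; rewrite -Em -(subnKC (ltnW hmN)) zero // eqxx.
Qed.


Lemma Cbr s u z : (1 <= s <= 2 * n)%N -> z \in F s -> br u z \in F s.+1.
Proof.
move=> hs hz; case: (leqP s 2) => [hs2|hs2].
  apply: (subvP (@Fmono s.+1 3 ltac:(lia))).
  by rewrite -lcs1; apply: (brsp_mem Hlie); exact: memvf.
case: (ltnP s (2 * n)) => hs3.
  by rewrite -lcs_succ; [apply: (brsp_mem Hlie) => //; exact: memvf | lia].
have Es : s = (2 * n)%N by lia.
subst s.
have [a [z' [hz' ->]]] := Fdec (t := (2 * n)%N) ltac:(lia) hz.
move: hz'; rewrite Fend memv0 => /eqP ->.
by rewrite (brDr Hlie) (brZr Hlie) central (br0r Hlie) scaler0 addr0 mem0v.
Qed.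

Lemma Key t : (2 <= t <= 2 * n - 1)%N -> exists u, br u (e t) \notin F t.+2.
Proof.
move=> ht; apply: NNPP => H.
have H1 : forall u, br u (e t) \in F t.+2.
  by move=> u; apply/negPn/negP => hn; apply: H; exists u.
have H2 : forall u z, z \in F t -> br u z \in F t.+2.
  move=> u z hz; have [a [z' [hz' ->]]] := Fdec (t := t) ltac:(lia) hz.
  rewrite (brDr Hlie) (brZr Hlie); apply: memvD; first by apply: memvZ.
  by apply: Cbr => //; lia.
have sub : (F t.+1 <= F t.+2)%VS.
  case: (leqP 3 t) => h3.
    by rewrite -lcs_succ; [apply: brsp_sub => u z _ hz; exact: H2| lia].
  have Et : t = 2%N by lia.
  subst t.
  rewrite -lcs1; apply: brsp_sub => u v hu' hv'.
  have hv : v \in F 1 by rewrite F1 memvf.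
  have hu : u \in F 1 by rewrite F1 memvf.
  have [a [v' [hv'' ->]]] := Fdec (t := 1) ltac:(lia) hv.
  rewrite (brDr Hlie) (brZr Hlie); apply: memvD; last exact: H2.
  apply: memvZ; rewrite (br_anti Hlie) memvN.
  have [b [u' [hu'' ->]]] := Fdec (t := 1) ltac:(lia) hu.
  by rewrite (brDr Hlie) (brZr Hlie) (br_xx Hlie) scaler0 add0r; exact: H2.
have := @e_notin t.+1 ltac:(lia).
by move/negP; apply; apply: (subvP sub); apply: mem_e; lia.
Qed.

Lemma Step t x : (2 <= t <= 2 * n - 1)%N -> x \in F t -> x \notin F t.+1 ->
  exists u, br u x \in F t.+1 /\ br u x \notin F t.+2.
Proof.
move=> ht hx hnx; have [u hu] := Key ht; exists u.
have [a [x' [hx' Ex]]] := Fdec (t := t) ltac:(lia) hx.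
split; first by apply: Cbr => //; lia.
apply/negP => hin; move/negP: hu; apply.
have ha : a != 0.
  apply/eqP => a0; move/negP: hnx; apply; by rewrite Ex a0 scale0r add0r.
have hb : br u x' \in F t.+2 by apply: Cbr => //; lia.
have h : a *: br u (e t) \in F t.+2.
  have -> : a *: br u (e t) = br u x - br u x' by rewrite Ex (brDr Hlie) (brZr Hlie) addrK.
  exact: memvB.
by rewrite -(scalerK ha (br u (e t))); apply: memvZ.
Qed.

Lemma Key1 : br (e 2) (e 1) \notin F 4.
Proof.
apply/negP => H.
have G3 : forall u z, z \in F 3 -> br u z \in F 4 by move=> u z hz; apply: Cbr => //; lia.
have dec2 : forall u, exists b1 b2 u2, u2 \in F 3 /\ u = b1 *: e 1 + (b2 *: e 2 + u2).
  move=> u; have hu : u \in F 1 by rewrite F1 memvf.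
  have [b1 [u1 [hu1 ->]]] := Fdec (t := 1) ltac:(lia) hu.
  have [b2 [u2 [hu2 ->]]] := Fdec (t := 2) ltac:(lia) hu1.
  by exists b1, b2, u2.
have A : forall u, br u (e 2) \in F 4.
  move=> u; have [b1 [b2 [u2 [hu2 ->]]]] := dec2 u.
  rewrite !(brDl Hlie) !(brZl Hlie) (br_xx Hlie) scaler0 add0r.
  apply: memvD; first by apply: memvZ; rewrite (br_anti Hlie) memvN.
  by rewrite (br_anti Hlie) memvN; apply: G3.
have B : forall u, br u (e 1) \in F 4.
  move=> u; have [b1 [b2 [u2 [hu2 ->]]]] := dec2 u.
  rewrite !(brDl Hlie) !(brZl Hlie) (br_xx Hlie) scaler0 add0r.
  apply: memvD; first by apply: memvZ.
  by rewrite (br_anti Hlie) memvN; apply: G3.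
have sub : (F 3 <= F 4)%VS.
  rewrite -lcs1; apply: brsp_sub => u v _ _.
  have [c1 [c2 [v2 [hv2 ->]]]] := dec2 v.
  rewrite !(brDr Hlie) !(brZr Hlie).
  by apply: memvD; [apply: memvZ| apply: memvD; [apply: memvZ| apply: G3]].
have := @e_notin 3 ltac:(lia).
by move/negP; apply; apply: (subvP sub); apply: mem_e; lia.
Qed.

Lemma Step1 x : x \notin F 2 -> exists u, br u x \in F 3 /\ br u x \notin F 4.
Proof.
move=> hnx; exists (e 2); split.
  by rewrite -lcs1; apply: (brsp_mem Hlie); exact: memvf.
have hx : x \in F 1 by rewrite F1 memvf.
have [a [x1 [hx1 Ex]]] := Fdec (t := 1) ltac:(lia) hx.
have [b [x2 [hx2 Ex1]]] := Fdec (t := 2) ltac:(lia) hx1.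
have ha : a != 0.
  apply/eqP => a0; move/negP: hnx; apply; by rewrite Ex a0 scale0r add0r.
have hb : br (e 2) x2 \in F 4 by apply: Cbr => //; lia.
apply/negP => hin; move/negP: Key1; apply.
have h : a *: br (e 2) (e 1) \in F 4.
  have -> : a *: br (e 2) (e 1) = br (e 2) x - br (e 2) x2.
    by rewrite Ex Ex1 !(brDr Hlie) !(brZr Hlie) (br_xx Hlie) scaler0 add0r addrK.
  exact: memvB.
by rewrite -(scalerK ha (br (e 2) (e 1))); apply: memvZ.
Qed.

Lemma Fsplit t x : (1 <= t <= 2 * n)%N -> x \in F t -> x \notin F t.+1 ->
  F t = (<[x]> + F t.+1)%VS.
Proof.
move=> ht hx hnx; apply/eqP; rewrite eq_sym eqEdim subv_add -memvE hx.
rewrite (@Fmono t t.+1 ltac:(lia)) /= (dim_add_line hnx) !dimF; lia.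
Qed.

Lemma Fill (I : {vspace V}) : (forall u y, y \in I -> br u y \in I) ->
  forall t x, (2 <= t <= 2 * n)%N -> x \in I -> x \in F t -> x \notin F t.+1 ->
  (F t <= I)%VS.
Proof.
move=> hI; suff: forall j t x, (2 * n - t)%N = j -> (2 <= t <= 2 * n)%N -> x \in I ->
   x \in F t -> x \notin F t.+1 -> (F t <= I)%VS by move=> H t x; apply: H.
elim=> [|j IH] t x hj ht hxI hx hnx.
  rewrite (Fsplit _ hx hnx); last lia.
  rewrite subv_add -memvE hxI /=.
  have -> : t.+1 = (2 * n).+1 by lia.
  by rewrite Fend sub0v.
have [u [h1 h2]] := @Step t x ltac:(lia) hx hnx.
rewrite (Fsplit _ hx hnx); last lia.
rewrite subv_add -memvE hxI /=.
by apply: (IH t.+1 (br u x)) => //; [lia|lia|exact: hI].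
Qed.

Lemma Level t x : x \notin F t.+1 -> exists s, (1 <= s <= t)%N /\ x \in F s /\ x \notin F s.+1.
Proof.
elim: t x => [|t IH] x hx.
  by move: hx; rewrite F1 memvf.
case: (boolP (x \in F t.+1)) => h.
  by exists t.+1; split; [lia|split].
have [s [hs [h1 h2]]] := IH x h.
by exists s; split; [lia|split].
Qed.

Lemma IL (I : {vspace V}) t x : (forall u y, y \in I -> br u y \in I) ->
  (3 <= t <= 2 * n)%N -> x \in I -> x \notin F t.+1 -> (F t <= I)%VS.
Proof.
move=> hI ht hxI hnx; have [s [hs [h1 h2]]] := Level hnx.
case: (leqP 2 s) => hs2.
  have h := Fill hI (t := s) ltac:(lia) hxI h1 h2.
  by apply/subvP => v hv; apply: (subvP h); apply: (subvP (@Fmono s t ltac:(lia))).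
have Es : s = 1%N by lia.
subst s.
have [u [h3 h4]] := Step1 h2.
have h := Fill hI (t := 3) ltac:(lia) (hI u x hxI) h3 h4.
by apply/subvP => v hv; apply: (subvP h); apply: (subvP (@Fmono 3 t ltac:(lia))).
Qed.

Lemma GL (I J : {vspace V}) t x : (forall u y, y \in I -> br u y \in J) ->
  (forall u y, y \in J -> br u y \in J) ->
  (2 <= t <= 2 * n - 1)%N -> x \in I -> x \notin F t.+1 -> (F t.+1 <= J)%VS.
Proof.
move=> hIJ hJ ht hxI hnx; have [s [hs [h1 h2]]] := Level hnx.
case: (leqP 2 s) => hs2.
  have [u [h3 h4]] := @Step s x ltac:(lia) h1 h2.
  have h := Fill hJ (t := s.+1) ltac:(lia) (hIJ u x hxI) h3 h4.
  by apply/subvP => v hv; apply: (subvP h); apply: (subvP (@Fmono s.+1 t.+1 ltac:(lia))).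
have Es : s = 1%N by lia.
subst s.
have [u [h3 h4]] := Step1 h2.
have h := Fill hJ (t := 3) ltac:(lia) (hIJ u x hxI) h3 h4.
by apply/subvP => v hv; apply: (subvP h); apply: (subvP (@Fmono 3 t.+1 ltac:(lia))).
Qed.


Lemma ex_notin (U W : {vspace V}) : (\dim W < \dim U)%N -> exists x, x \in U /\ x \notin W.
Proof.
move=> hd; have : ~~ (U <= W)%VS.
  by apply/negP => /dimvS; rewrite leqNgt hd.
by case/subvPn => x h1 h2; exists x.
Qed.

Variables (L : nat -> {vspace V}) (f : nat -> V) (w : nat -> nat).
Hypothesis HL : pos_filtration br L.
Hypothesis HA : adapted_basis L (2 * n) f.
Hypothesis HW : forall i, (1 <= i <= 2 * n)%N -> is_weight L (f i) (w i).
Hypothesis Hmono : forall i, (1 <= i < 2 * n)%N -> (w i <= w i.+1)%N.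

Lemma Lmono a b : (1 <= a <= b)%N -> (L b <= L a)%VS.
Proof.
elim: b => [|b IH] h; first lia.
case: (eqVneq a b.+1) => [->|ne]; first exact: subvv.
case: HL => _ hstep _ _.
apply/subvP => v hv; apply: (subvP (IH ltac:(lia))).
by apply: (subvP (hstep b ltac:(lia))).
Qed.

Lemma Lideal c u y : (1 <= c)%N -> y \in L c -> br u y \in L c.+1.
Proof.
move=> hc hy; case: HL => h1 _ _ h4.
rewrite -add1n; apply: (subvP (h4 1%N c (leqnn 1) hc)).
by apply: (brsp_mem Hlie) => //; rewrite h1 memvf.
Qed.

Lemma Lideal' c u y : (1 <= c)%N -> y \in L c -> br u y \in L c.
Proof.
by move=> hc hy; apply: (subvP (@Lmono c c.+1 ltac:(lia))); apply: Lideal.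
Qed.

Lemma Lbr a b x y : (1 <= a)%N -> (1 <= b)%N -> x \in L a -> y \in L b -> br x y \in L (a + b).
Proof.
move=> ha hb hx hy; case: HL => _ _ _ h4.
by apply: (subvP (h4 a b ha hb)); apply: (brsp_mem Hlie).
Qed.

Lemma wmono i j : (1 <= i <= j)%N -> (j <= 2 * n)%N -> (w i <= w j)%N.
Proof.
elim: j => [|j IH] h hj; first lia.
case: (eqVneq i j.+1) => [->//|ne].
apply: (leq_trans (IH ltac:(lia) ltac:(lia))); apply: Hmono; lia.
Qed.

Lemma w_pos i : (1 <= i <= 2 * n)%N -> (1 <= w i)%N.
Proof. by move=> hi; case: (HW hi). Qed.

Lemma f_in i c : (1 <= i <= 2 * n)%N -> (1 <= c <= w i)%N -> f i \in L c.
Proof.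
move=> hi hc; case: (HW hi) => h1 h2 _.
by apply: (subvP (@Lmono c (w i) hc)).
Qed.

Lemma f_notin i c : (1 <= i <= 2 * n)%N -> (w i < c)%N -> f i \notin L c.
Proof. by move=> hi hc; case: (HW hi) => _ _ h3; apply: h3. Qed.

Lemma dimL_ge j : (1 <= j <= 2 * n)%N -> ((2 * n).+1 - j <= \dim (L (w j)))%N.
Proof.
move=> hj; have hfree : free [seq f i | i <- iota j ((2 * n).+1 - j)].
  by apply: free_iota_sub; [case: HA => /andP[] | lia].
rewrite -(size_iota j ((2 * n).+1 - j)) -(size_map f) -(eqP hfree).
apply: dimvS; apply/span_subvP => v /mapP [i]; rewrite mem_iota => hi ->.
apply: f_in; first lia.
by rewrite w_pos ?wmono //; lia.
Qed.

Lemma dimL_le c i : (1 <= c)%N -> (1 <= i <= 2 * n)%N -> (w i < c)%N ->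
  (\dim (L c) <= 2 * n - i)%N.
Proof.
move=> hc hi hw; rewrite leqNgt; apply/negP => hD.
move/negP: (f_notin hi hw); apply.
case: HA => _ h; rewrite (h c hc).
by apply: memv_span; apply: map_f; rewrite mem_iota; lia.
Qed.

Lemma top c x : (1 <= c)%N -> x \in L c -> x != 0 -> (c <= w (2 * n))%N.
Proof.
move=> hc hx hx0; rewrite leqNgt; apply/negP => hlt.
have := @dimL_le c (2 * n) hc ltac:(lia) hlt; rewrite subnn leqn0 dimv_eq0 => /eqP h0.
by move: hx; rewrite h0 memv0 (negbTE hx0).
Qed.

Lemma strict i : (2 <= i <= 2 * n - 1)%N -> (w i < w i.+1)%N.
Proof.
move=> hi; rewrite ltn_neqAle Hmono ?andbT; last lia.
apply/eqP => Ec.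
have hD := @dimL_ge i ltac:(lia).
have hc1 : (1 <= w i)%N by apply: w_pos; lia.
set c := w i in Ec hD hc1 *.
have [x [hx hnx]] : exists x, x \in L c /\ x \notin F i.+1.
  by apply: ex_notin; rewrite dimF; lia.
have hsub := @GL (L c) (L c.+1) i x (fun u y => @Lideal c u y hc1)
   (fun u y => @Lideal' c.+1 u y ltac:(lia)) ltac:(lia) hx hnx.
have h1 := dimvS hsub; rewrite dimF in h1; last lia.
have h2 := @dimL_le c.+1 i.+1 ltac:(lia) ltac:(lia) ltac:(rewrite -Ec; lia).
lia.
Qed.

Lemma e_in_L k : (3 <= k <= 2 * n)%N -> e k \in L (w k).
Proof.
move=> hk; have hD := @dimL_ge k ltac:(lia).
have [x [hx hnx]] : exists x, x \in L (w k) /\ x \notin F k.+1.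
  by apply: ex_notin; rewrite dimF; lia.
have hsub := @IL (L (w k)) k x (fun u y => @Lideal' (w k) u y ltac:(apply: w_pos; lia))
   ltac:(lia) hx hnx.
by apply: (subvP hsub); apply: mem_e; lia.
Qed.

Lemma mult1 k : (3 <= k <= 2 * n - 2)%N -> mult (2 * n) w (w k) = 1%N.
Proof.
move=> hk; rewrite /mult.
rewrite (@eq_in_count _ _ (pred1 k)); last first.
  move=> i; rewrite mem_iota => hi /=.
  case: (ltngtP i k) => hik.
  - have := @wmono i k.-1 ltac:(lia) ltac:(lia).
    have := @strict k.-1 ltac:(lia); rewrite prednK; last lia.
    move=> h1 h2; apply/eqP; lia.
  - have := @wmono k.+1 i ltac:(lia) ltac:(lia).
    have := @strict k ltac:(lia).
    move=> h1 h2; apply/eqP; lia.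
  - by rewrite hik !eqxx.
by rewrite count_uniq_mem ?iota_uniq // mem_iota; lia.
Qed.

Lemma final k : (3 <= k <= n)%N -> br (e k) (e (2 * n + 1 - k)%N) != 0 ->
  (forall i, (1 <= i <= 2 * n)%N -> (w (2 * n)%N <= w i + w (2 * n + 1 - i)%N)%N) ->
  (forall i, (1 <= i <= 2 * n)%N ->
             (w i + w (2 * n + 1 - i) = w (2 * n))%N ->
             w i != w (2 * n + 1 - i)%N ->
             (2 <= mult (2 * n) w (w i))%N \/
             (2 <= mult (2 * n) w (w (2 * n + 1 - i)%N))%N) -> False.
Proof.
move=> hk hbr HF2 HF3.
set kh := (2 * n + 1 - k)%N.
have hek := @e_in_L k ltac:(lia).
have hekh := @e_in_L kh ltac:(rewrite /kh; lia).
have hin := @Lbr (w k) (w kh) _ _ ltac:(apply: w_pos; lia) ltac:(apply: w_pos; rewrite /kh; lia) hek hekh.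
have hle := @top (w k + w kh) _ ltac:(have := @w_pos k ltac:(lia); lia) hin hbr.
have hge : (w (2 * n) <= w k + w kh)%N := @HF2 k ltac:(lia).
have hlt : (w k < w kh)%N.
  apply: leq_trans (@strict k ltac:(lia)) _.
  apply: wmono; rewrite /kh; lia.
have [] := @HF3 k ltac:(lia) ltac:(rewrite -/kh; lia) ltac:(rewrite -/kh; apply/eqP; lia).
  by rewrite mult1 //; lia.
by rewrite -/kh mult1 //; rewrite /kh; lia.
Qed.

End Main.

Unset Implicit Arguments.
Theorem lemma3p2 (R : realType) (V : vectType R) (br : V -> V -> V) (n : nat)
  (e : nat -> V) :
  is_lie_bracket br ->
  filiform br ->
  \dim (fullv : {vspace V}) = (2 * n)%N ->
  basis_of fullv [seq e i | i <- iota 1 (2 * n)] ->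
  (forall k, (1 <= k <= 2 * n - 2)%N ->
     lcs br k = (<<[seq e i | i <- iota (2 + k) (2 * n - 1 - k)]>>)%VS) ->
  (exists k, (3 <= k <= n)%N /\ br (e k) (e (2 * n + 1 - k)%N) != 0) ->
  ~ exists (L : nat -> {vspace V}) (f : nat -> V) (w : nat -> nat),
      pos_filtration br L /\
          adapted_basis L (2 * n) f /\
          (forall i, (1 <= i <= 2 * n)%N -> is_weight L (f i) (w i)) /\
          (* (F1) *)
          ((0 < w 1%N)%N /\ (forall i, (1 <= i < 2 * n)%N -> (w i <= w i.+1)%N)) /\
          (* (F2) *)
          (forall i, (1 <= i <= 2 * n)%N ->
             (w (2 * n)%N <= w i + w (2 * n + 1 - i)%N)%N /\
             (w (2 * n - 1)%N < w i + w (2 * n + 1 - i)%N)%N) /\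
          (* (F3) *)
          (forall i, (1 <= i <= 2 * n)%N ->
             (w i + w (2 * n + 1 - i) = w (2 * n))%N ->
             w i != w (2 * n + 1 - i)%N ->
             (2 <= mult (2 * n) w (w i))%N \/
             (2 <= mult (2 * n) w (w (2 * n + 1 - i)%N))%N) /\
          (* (F4) *)
          (forall i, (1 <= i <= 2 * n)%N ->
             (w i + w (2 * n + 1 - i) = w (2 * n))%N ->
             w i = w (2 * n + 1 - i)%N ->
             i = (2 * n + 1 - i)%N \/ (2 < mult (2 * n) w (w i))%N).

Proof.
move=> Hlie [Hnil _] Hdim Hbasis Hlcs [k [hk hbr]]
  [L [f [w [HL [HA [HW [[Hw1 Hmono] [HF2 [HF3 _]]]]]]]]].
have Hn : (3 <= n)%N by lia.
eapply final; try eassumption.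
by move=> i hi; case: (HF2 i hi).
Qed.
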